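(* Let $\mathcal{H}$ be a quantum system of dimension $d$ with orthonormal basis $\{|i\rangle\}_{i=1}^d$, and let $\sigma=\sum_{i=1}^d p_i|i\rangle\langle i|$ where $\{p_i\}$ is a probability distribution with $p_1\ge p_2\ge\cdots\ge p_d$. Let $\epsilon>0$, and let $\sigma^{(A)}$ and $\sigma^{(G)}$ be the approximate states of $\sigma$ obtained by the arithmetic mean method and the geometric mean method, respectively. Then $$\|\sigma^{(A)}-\sigma\|_1\le\epsilon,\qquad \|\sigma^{(G)}-\sigma\|_1\le\epsilon .$$
   Context: $\|\cdot\|_1$ is the trace norm. Arithmetic mean method: let $k_0=0$; for $i=1,2,\dots$ let $k_i$ be the largest integer ($\le d$) such that $|p_{k_{i-1}+1}-p_{k_i}|\le\epsilon/d$, and set $I_i=\{k_{i-1}+1,\dots,k_i\}$; stop at the index $L$ with $k_L=d$. For $j\in I_i$ set $p_j^{(A)}=\frac{1}{|I_i|}\sum_{m\in I_i}p_m$, and $\sigma^{(A)}=\sum_{j=1}^d p_j^{(A)}|j\rangle\langle j|$. Geometric mean method: identical except that $k_i$ is the largest integer ($\le d$) such that $p_{k_i}/p_{k_{i-1}+1}\ge 1/(1+\epsilon)$; the bins $I_i$ are defined likewise, $p_j^{(G)}=\frac{1}{|I_i|}\sum_{m\in I_i}p_m$ for $j\in I_i$, and $\sigma^{(G)}=\sum_{j} p_j^{(G)}|j\rangle\langle j|$. *)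

(* Defs.v *)
From HB Require Import structures.
From mathcomp Require Import all_boot all_order all_algebra.
Set Implicit Arguments. Unset Strict Implicit. Unset Printing Implicit Defensive.
Import Order.TTheory GRing.Theory Num.Theory.
Local Open Scope ring_scope.

(* Indices are 1-based as in the paper: the distribution is p 1, ..., p d
   (values of p outside 1..d are irrelevant). *)

Section Binning.
Variables (R : realFieldType) (d : nat) (p : nat -> R).

Definition next_k (c : R -> R -> bool) (k : nat) : nat :=
  if (k < d)%N then \max_(k.+1 <= m < d.+1 | c (p k.+1) (p m)) m else k.

Definition k_seq (c : R -> R -> bool) (i : nat) : nat := iter i (next_k c) 0%N.

(* averaged probability: p^(.)_j = mean of p over the bin I_i = {k_{i-1}+1..k_i}
   containing j.  The sum over i picks out the unique bin containing j
   (bins after the stopping index are empty). *)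
Definition binned (c : R -> R -> bool) (j : nat) : R :=
  \sum_(1 <= i < d.+1)
    if (k_seq c i.-1 < j <= k_seq c i)%N then
      (k_seq c i - k_seq c i.-1)%:R^-1 *
        \sum_((k_seq c i.-1).+1 <= m < (k_seq c i).+1) p m
    else 0.

End Binning.

Definition arith_crit (R : realFieldType) (d : nat) (eps : R) : R -> R -> bool :=
  fun a b => `|a - b| <= eps / d%:R.

(* geometric-mean criterion: p_{k_i} / p_{k_{i-1}+1} >= 1/(1+eps),
   written without division as (1+eps) p_{k_i} >= p_{k_{i-1}+1} *)
Definition geom_crit (R : realFieldType) (eps : R) : R -> R -> bool :=
  fun a b => a <= (1 + eps) * b.

Definition sigmaA (R : realFieldType) (d : nat) (eps : R) (p : nat -> R) : nat -> R :=
  binned d p (arith_crit d eps).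
Definition sigmaG (R : realFieldType) (d : nat) (eps : R) (p : nat -> R) : nat -> R :=
  binned d p (geom_crit eps).

Definition diag_state (R : realFieldType) (d : nat) (q : nat -> R) : 'M[R]_d :=
  diag_mx (\row_(i < d) q i.+1).

(* trace norm of a diagonal matrix: ||A||_1 = sum_i |A_ii|
   (singular values of a diagonal matrix are the |A_ii|) *)
Definition diag_trace_norm (R : realFieldType) (d : nat) (A : 'M[R]_d) : R :=
  \sum_(i < d) `|A i i|.

(* Main.v *)
Require Import Defs.
From HB Require Import structures.
From mathcomp Require Import all_boot all_order all_algebra.
From mathcomp Require Import zify lra.
Import Order.TTheory GRing.Theory Num.Theory.
Local Open Scope ring_scope.

Lemma bigmax_seq_spec (r : seq nat) (P : pred nat) :
  has P r -> exists2 m, m \in r & P m /\ (\max_(i <- r | P i) i)%N = m.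
Proof.
elim: r => [//|x s IH] /=.
rewrite big_cons; case Px: (P x) => /= Hh.
  case hs: (has P s).
    have [m ms [Pm ->]] := IH hs.
    case: (leqP x m) => hxm.
      by exists m; [rewrite inE ms orbT | split=> //; apply/maxn_idPr].
    by exists x; [rewrite inE eqxx | split=> //; apply/maxn_idPl; exact: ltnW].
  rewrite big_hasC ?hs // maxn0.
  by exists x; [rewrite inE eqxx|].
have [m ms [Pm ->]] := IH Hh.
by exists m; [rewrite inE ms orbT|].
Qed.

Section Bin.
Variables (R : realFieldType) (d : nat) (p : nat -> R) (c : R -> R -> bool).
Hypothesis Hc : forall k, (k < d)%N -> c (p k.+1) (p k.+1).

Lemma next_spec k : (k < d)%N ->
  (k < next_k d p c k <= d)%N /\ c (p k.+1) (p (next_k d p c k)).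
Proof.
move=> kd; rewrite /next_k kd.
have hh : has (fun m => c (p k.+1) (p m)) (index_iota k.+1 d.+1).
  apply/hasP; exists k.+1; last exact: Hc.
  by rewrite mem_index_iota; lia.
have [m ms [Pm ->]] := bigmax_seq_spec _ _ hh.
by move: ms; rewrite mem_index_iota => ms; split=> //; lia.
Qed.

Notation K := (k_seq d p c).

Lemma K_S i : K i.+1 = next_k d p c (K i).
Proof. by []. Qed.

Lemma K_le i : (K i <= d)%N.
Proof.
elim: i => [|i IH]; first by [].
rewrite K_S; case h: (K i < d)%N; last by rewrite /next_k h.
by have [/andP [_ ->] _] := next_spec _ h.
Qed.

Lemma K_incr i : (K i <= K i.+1)%N.
Proof.
rewrite K_S; case h: (K i < d)%N; last by rewrite /next_k h.
by have [/andP [/ltnW ->] _] := next_spec _ h.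
Qed.

Lemma K_mono i n : (K i <= K (i + n))%N.
Proof.
elim: n => [|n IH]; first by rewrite addn0.
by apply: (leq_trans IH); rewrite addnS; apply: K_incr.
Qed.

Lemma K_mono2 i j : (i <= j)%N -> (K i <= K j)%N.
Proof. by move=> h; rewrite -(subnKC h); apply: K_mono. Qed.

Lemma K_ge i : (minn i d <= K i)%N.
Proof.
elim: i => [|i IH]; first by rewrite min0n.
rewrite K_S; case h: (K i < d)%N.
  have [/andP [h1 _] _] := next_spec _ h. lia.
rewrite /next_k h. have := K_le i. lia.
Qed.

Hypothesis Hp : forall i j, (1 <= i)%N -> (i <= j)%N -> (j <= d)%N -> p j <= p i.

Lemma bin_bound j : (1 <= j <= d)%N -> exists a b,
  [/\ (a < j <= b)%N, (b <= d)%N, c (p a.+1) (p b) &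
     `|binned d p c j - p j| <= p a.+1 - p b].
Proof.
move=> /andP [j1 jd].
have exP : exists n, (fun n => j <= K n)%N n.
  exists d; have := K_ge d; rewrite minnn => h; exact: leq_trans jd h.
case: (ex_minnP exP) => i0 Pi0 Hmin.
have i0pos : (0 < i0)%N.
  rewrite lt0n; apply/eqP => i00; rewrite i00 /k_seq /= in Pi0; lia.
have i0d : (i0 <= d)%N.
  apply: Hmin; have := K_ge d; rewrite minnn => h; exact: leq_trans jd h.
have aj : (K i0.-1 < j)%N.
  rewrite ltnNge; apply/negP => h; have := Hmin _ h; lia.
have ad : (K i0.-1 < d)%N by lia.
have Ki0 : K i0 = next_k d p c (K i0.-1) by rewrite -K_S prednK.
have [/andP [ab bd] cab] := next_spec _ ad.
rewrite -Ki0 in ab bd cab.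
exists (K i0.-1), (K i0); split => //; first by rewrite aj Pi0.
rewrite /binned (bigD1_seq i0) /=; last exact: iota_uniq.
2: by rewrite mem_index_iota; lia.
rewrite [\sum_(_ <= _ < _ | _ != i0) _]big1 ?addr0; last first.
  move=> i ii0. case: ifP => // /andP [h1 h2]; exfalso.
  case: (ltngtP i i0) ii0 => // hi _.
    have h3 : (i <= i0.-1)%N by lia.
    have := K_mono2 _ _ h3; lia.
  have h3 : (i0 <= i.-1)%N by lia.
  have := K_mono2 _ _ h3; lia.
rewrite aj Pi0 /=.
set a := K i0.-1 in aj ab cab *; set b := K i0 in Pi0 ab bd cab *.
set S := \sum_(a.+1 <= m < b.+1) p m.
have npos : 0 < (b - a)%:R :> R by rewrite ltr0n subn_gt0.
have S1 : p b *+ (b - a) <= S.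
  rewrite -[(b - a)%N]/(b.+1 - a.+1)%N -sumr_const_nat; apply: ler_sum_nat => m hm.
  apply: Hp; lia.
have S2 : S <= p a.+1 *+ (b - a).
  rewrite -[(b - a)%N]/(b.+1 - a.+1)%N -sumr_const_nat; apply: ler_sum_nat => m hm.
  apply: Hp; lia.
have m1 : p b <= (b - a)%:R^-1 * S.
  by rewrite mulrC ler_pdivlMr // mulr_natr.
have m2 : (b - a)%:R^-1 * S <= p a.+1.
  by rewrite mulrC ler_pdivrMr // mulr_natr.
have j1' : p b <= p j by apply: Hp; lia.
have j2' : p j <= p a.+1 by apply: Hp; lia.
rewrite ler_norml; apply/andP; split; lra.
Qed.

End Bin.

Lemma trace_bound (R : realFieldType) (d : nat) (p q f : nat -> R) :
  (forall j, (1 <= j <= d)%N -> `|q j - p j| <= f j) ->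
  diag_trace_norm (diag_state d q - diag_state d p) <= \sum_(i < d) f i.+1.
Proof.
move=> H; rewrite /diag_trace_norm; apply: ler_sum => i _.
rewrite /diag_state !mxE eqxx !mulr1n; apply: H.
by rewrite ltn_ord.
Qed.

Theorem proposition1 (R : realFieldType) (d : nat) (p : nat -> R) (eps : R) :
  (0 < d)%N ->
  (forall i, (1 <= i <= d)%N -> 0 <= p i) ->
  \sum_(1 <= i < d.+1) p i = 1 ->
  (forall i j, (1 <= i)%N -> (i <= j)%N -> (j <= d)%N -> p j <= p i) ->
  0 < eps ->
  diag_trace_norm (diag_state d (sigmaA d eps p) - diag_state d p) <= eps /\
  diag_trace_norm (diag_state d (sigmaG d eps p) - diag_state d p) <= eps.
Proof.
move=> d0 p0 psum Hp e0.
have dpos : 0 < d%:R :> R by rewrite ltr0n.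
split.
  apply: le_trans (@trace_bound _ _ _ _ (fun _ => eps / d%:R) _) _.
    move=> j hj.
    have Hc : forall k, (k < d)%N -> arith_crit d eps (p k.+1) (p k.+1).
      move=> k _; rewrite /arith_crit subrr normr0; apply: divr_ge0; [exact: ltW | exact: ltW].
    have [a [b [abj bd cab hb]]] := @bin_bound _ _ _ _ Hc Hp j hj.
    apply: (le_trans hb); apply: le_trans (ler_norm _) cab.
  by rewrite sumr_const card_ord -[_ *+ d]mulr_natr divfK // gt_eqF.
apply: le_trans (@trace_bound _ _ _ _ (fun j => eps * p j) _) _.
  move=> j hj.
  have Hc : forall k, (k < d)%N -> geom_crit eps (p k.+1) (p k.+1).
    move=> k kd; rewrite /geom_crit.
    have : 0 <= p k.+1 by apply: p0; lia.
    nra.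
  have [a [b [/andP [aj jb] bd cab hb]]] := @bin_bound _ _ _ _ Hc Hp j hj.
  apply: (le_trans hb); rewrite /geom_crit in cab.
  have : p b <= p j by apply: Hp; lia.
  nra.
rewrite -mulr_sumr.
have -> : \sum_(i < d) p i.+1 = 1 by rewrite -psum big_add1 /= big_mkord.
by rewrite mulr1.
Qed.
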